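(* Let $d\ge1$, $L_{2d}=2U\oplus 2E_8(-1)\oplus\langle -2d\rangle$, and let $r\in L_{2d}$ be a primitive vector with $r^2=-2d$. If $\mathrm{div}(r)=2d$, then $r^\perp_{L_{2d}}\cong 2U\oplus 2E_8(-1)$. If $\mathrm{div}(r)=d$, then either $r^\perp_{L_{2d}}\cong U\oplus 2E_8(-1)\oplus\langle 2\rangle\oplus\langle -2\rangle$ or $r^\perp_{L_{2d}}\cong U\oplus 2E_8(-1)\oplus U(2)$.
   Context: $U$ is the hyperbolic plane, $U(2)$ is $U$ with form multiplied by $2$, $E_8(-1)$ is the negative definite $E_8$ lattice, $\langle m\rangle$ is the rank one lattice with generator of square $m$. For $l\in L$, $\mathrm{div}(l)$ is the positive generator of the ideal $(l,L)\subset\mathbb Z$; $r^\perp_{L_{2d}}$ is the orthogonal complement of $r$ in $L_{2d}$. *)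

(* Defs.v *)
(* Integral lattices are given by integral Gram matrices;
   a lattice with Gram matrix G : 'M[int]_n is Z^n (row vectors) with
   bilinear form (x, y) = x G y^T. *)
From HB Require Import structures.
From mathcomp Require Import all_boot all_order all_algebra.
Set Implicit Arguments. Unset Strict Implicit. Unset Printing Implicit Defensive.
Import Order.TTheory GRing.Theory Num.Theory.
Local Open Scope ring_scope.

Definition bil (n : nat) (G : 'M[int]_n) (x y : 'rV[int]_n) : int :=
  (x *m G *m y^T) 0 0.

Definition dsum (m n : nat) (A : 'M[int]_m) (B : 'M[int]_n) : 'M[int]_(m + n) :=
  block_mx A 0 0 B.

Definition Ugram : 'M[int]_2 := \matrix_(i, j) (if i != j then 1 else 0).
Definition U2gram : 'M[int]_2 := 2%:~R *: Ugram.
Definition rank1 (m : int) : 'M[int]_1 := m%:M.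

(* Edges of the E8 Dynkin diagram on nodes 0..7: chain 0-1-2-3-4-5-6,
   node 7 attached to node 4 (arms of lengths 4, 2, 1 from node 4). *)
Definition E8edge (i j : nat) : bool :=
  ((i.+1 == j) && (j <= 6)%N) || ((j.+1 == i) && (i <= 6)%N)
  || ((i == 4%N) && (j == 7%N)) || ((i == 7%N) && (j == 4%N)).
Definition E8m : 'M[int]_8 :=
  \matrix_(i, j) (if i == j then -2 else if E8edge i j then 1 else 0).

Definition L2d (d : nat) :=
  dsum (dsum (dsum (dsum Ugram Ugram) E8m) E8m) (rank1 (- (2 * d)%:Z)).

Definition primitive (n : nat) (r : 'rV[int]_n) : Prop :=
  forall (k : int) (s : 'rV[int]_n), r = k *: s -> k = 1 \/ k = -1.

Definition is_div (n : nat) (G : 'M[int]_n) (r : 'rV[int]_n) (m : int) : Prop :=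
  0 < m /\ (forall x, (m %| bil G r x)%Z) /\ (exists x, bil G r x = m).

Definition perp_iso (n k : nat) (G : 'M[int]_n) (r : 'rV[int]_n) (H : 'M[int]_k) : Prop :=
  exists B : 'M[int]_(k, n),
    (forall c : 'rV[int]_k, c *m B = 0 -> c = 0) /\
    (forall x : 'rV[int]_n, bil G r x = 0 <-> exists c : 'rV[int]_k, x = c *m B) /\
    B *m G *m B^T = H.

(* Main.v *)
Require Import Defs.
From HB Require Import structures.
From mathcomp Require Import all_boot all_order all_algebra.
From mathcomp Require Import ring lra zify.
From Stdlib Require Import Classical.
Set Implicit Arguments. Unset Strict Implicit. Unset Printing Implicit Defensive.
Import Order.TTheory GRing.Theory Num.Theory.
Local Open Scope ring_scope.


Definition gr n p q (G : 'M[int]_n) (A : 'M[int]_(p, n)) (B : 'M[int]_(q, n)) :=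
  A *m G *m B^T.

Lemma bil_gr n (G : 'M[int]_n) x y : bil G x y = gr G x y 0 0.
Proof. by []. Qed.

Lemma gr_dsum m n p q (P : 'M[int]_m) (Q : 'M[int]_n) (A1 : 'M_(p, m)) A2 (B1 : 'M_(q, m)) B2 :
  gr (dsum P Q) (row_mx A1 A2) (row_mx B1 B2) = gr P A1 B1 + gr Q A2 B2.
Proof.
rewrite /gr /dsum tr_row_mx mul_row_block !mulmx0 ?mul0mx !addr0 !add0r.
by rewrite mul_row_col.
Qed.

Lemma gr_colL n p1 p2 q (G : 'M[int]_n) (A1 : 'M_(p1, n)) (A2 : 'M_(p2, n)) (B : 'M_(q, n)) :
  gr G (col_mx A1 A2) B = col_mx (gr G A1 B) (gr G A2 B).
Proof. by rewrite /gr !mul_col_mx. Qed.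

Lemma gr_colR n p q1 q2 (G : 'M[int]_n) (A : 'M_(p, n)) (B1 : 'M_(q1, n)) (B2 : 'M_(q2, n)) :
  gr G A (col_mx B1 B2) = row_mx (gr G A B1) (gr G A B2).
Proof. by rewrite /gr tr_col_mx mul_mx_row. Qed.

Lemma gr_col n p1 p2 (G : 'M[int]_n) (A1 : 'M_(p1, n)) (A2 : 'M_(p2, n)) :
  gr G (col_mx A1 A2) (col_mx A1 A2) =
  block_mx (gr G A1 A1) (gr G A1 A2) (gr G A2 A1) (gr G A2 A2).
Proof. by rewrite gr_colL !gr_colR. Qed.

Lemma gr0l n p q (G : 'M[int]_n) (B : 'M_(q, n)) : gr G (0 : 'M_(p, n)) B = 0.
Proof. by rewrite /gr !mul0mx. Qed.
Lemma gr0r n p q (G : 'M[int]_n) (A : 'M_(p, n)) : gr G A (0 : 'M_(q, n)) = 0.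
Proof. by rewrite /gr trmx0 mulmx0. Qed.

Lemma gr_entry n p q (G : 'M[int]_n) (A : 'M_(p, n)) (B : 'M_(q, n)) i j :
  gr G A B i j = bil G (row i A) (row j B).
Proof.
rewrite /bil /gr !rowE trmx_mul trmx_delta !mulmxA.
have -> : delta_mx (0 : 'I_1) i *m A *m G *m B^T *m delta_mx j (0 : 'I_1) =
  delta_mx (0 : 'I_1) i *m (A *m G *m B^T) *m delta_mx j (0 : 'I_1) by rewrite !mulmxA.
by rewrite -rowE -colE !mxE.
Qed.

Lemma bilDl n (G : 'M[int]_n) x y z : bil G (x + y) z = bil G x z + bil G y z.
Proof. by rewrite /bil !mulmxDl mxE. Qed.
Lemma bilDr n (G : 'M[int]_n) x y z : bil G z (x + y) = bil G z x + bil G z y.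
Proof. by rewrite /bil linearD /= mulmxDr mxE. Qed.
Lemma bilZl n (G : 'M[int]_n) c x z : bil G (c *: x) z = c * bil G x z.
Proof. by rewrite /bil -!scalemxAl mxE. Qed.
Lemma bilZr n (G : 'M[int]_n) c x z : bil G z (c *: x) = c * bil G z x.
Proof. by rewrite /bil linearZ /= -scalemxAr mxE. Qed.
Lemma bilNl n (G : 'M[int]_n) x z : bil G (- x) z = - bil G x z.
Proof. by rewrite -scaleN1r bilZl mulN1r. Qed.
Lemma bilNr n (G : 'M[int]_n) x z : bil G z (- x) = - bil G z x.
Proof. by rewrite -scaleN1r bilZr mulN1r. Qed.
Lemma bilBl n (G : 'M[int]_n) x y z : bil G (x - y) z = bil G x z - bil G y z.
Proof. by rewrite bilDl bilNl. Qed.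
Lemma bilBr n (G : 'M[int]_n) x y z : bil G z (x - y) = bil G z x - bil G z y.
Proof. by rewrite bilDr bilNr. Qed.
Lemma bil0l n (G : 'M[int]_n) z : bil G 0 z = 0.
Proof. by rewrite /bil !mul0mx mxE. Qed.
Lemma bil0r n (G : 'M[int]_n) z : bil G z 0 = 0.
Proof. by rewrite /bil trmx0 mulmx0 mxE. Qed.
Lemma bilC n (G : 'M[int]_n) x y : G^T = G -> bil G x y = bil G y x.
Proof.
move=> sG; rewrite /bil.
have h : (x *m G *m y^T)^T = y *m G *m x^T by rewrite !trmx_mul trmxK sG mulmxA.
by rewrite -h [RHS]mxE.
Qed.


Lemma mx_ext_bil n (A B : 'M[int]_n) :
  (forall x z, bil A x z = bil B x z) -> A = B.
Proof.
move=> h; apply/matrixP => i j.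
have e : forall M : 'M[int]_n, M = gr M 1%:M 1%:M by move=> M; rewrite /gr mul1mx trmx1 mulmx1.
by rewrite (e A) (e B) !gr_entry h.
Qed.

Lemma mx_ext_row n (A B : 'M[int]_n) :
  (forall x : 'rV_n, x *m A = x *m B) -> A = B.
Proof. by move=> h; apply/row_matrixP => i; rewrite !rowE h. Qed.

Definition isom n (G : 'M[int]_n) (g h : 'M[int]_n) :=
  [/\ g *m h = 1%:M, h *m g = 1%:M & g *m G *m g^T = G].

Definition Reach n (G : 'M[int]_n) (x y : 'rV[int]_n) :=
  exists g h, isom G g h /\ y = x *m g.

Lemma isom_bil n (G : 'M[int]_n) g x z : g *m G *m g^T = G ->
  bil G (x *m g) (z *m g) = bil G x z.
Proof.
move=> hg; rewrite /bil trmx_mul.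
have -> : x *m g *m G *m (g^T *m z^T) = x *m (g *m G *m g^T) *m z^T by rewrite !mulmxA.
by rewrite hg.
Qed.

Lemma isom_inv n (G : 'M[int]_n) g h : isom G g h -> isom G h g.
Proof.
case=> gh hg gG; split=> //.
rewrite -[in LHS]gG.
have -> : h *m (g *m G *m g^T) *m h^T = (h *m g) *m G *m (h *m g)^T.
  by rewrite trmx_mul !mulmxA.
by rewrite hg mul1mx trmx1 mulmx1.
Qed.

Lemma reach_refl n (G : 'M[int]_n) x : Reach G x x.
Proof.
exists 1%:M, 1%:M; split; last by rewrite mulmx1.
by split; rewrite ?mulmx1 ?mul1mx ?trmx1 ?mulmx1.
Qed.

Lemma reach_trans n (G : 'M[int]_n) x y z : Reach G x y -> Reach G y z -> Reach G x z.
Proof.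
move=> [g1 [h1 [[a1 b1 c1] ->]]] [g2 [h2 [[a2 b2 c2] ->]]].
exists (g1 *m g2), (h2 *m h1); split; last by rewrite mulmxA.
split.
- by rewrite -mulmxA [g2 *m _]mulmxA a2 mul1mx a1.
- by rewrite -mulmxA [h1 *m _]mulmxA b1 mul1mx b2.
- rewrite trmx_mul -!mulmxA [g2 *m (G *m _)]mulmxA [g2 *m G *m _]mulmxA c2.
  by rewrite mulmxA.
Qed.

Definition tv n (G : 'M[int]_n) (e y : 'rV[int]_n) (q : int) : 'M[int]_n :=
  1%:M + (G *m e^T) *m y - (G *m y^T) *m e - q *: ((G *m e^T) *m e).

Lemma scal11 n (c : 'M[int]_1) (y : 'rV[int]_n) : c *m y = c 0 0 *: y.
Proof. by rewrite {1}[c]mx11_scalar mul_scalar_mx. Qed.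

Lemma tvE n (G : 'M[int]_n) e y q x :
  x *m tv G e y q = x + bil G x e *: y - bil G x y *: e - (q * bil G x e) *: e.
Proof.
rewrite /tv !mulmxDr !mulmxN mulmx1 -!scalemxAr !mulmxA !scal11.
by rewrite scalerA.
Qed.

Section TV.
Variables (n : nat) (G : 'M[int]_n) (e y : 'rV[int]_n) (q : int).
Hypotheses (sG : G^T = G) (hee : bil G e e = 0) (hye : bil G y e = 0)
  (hyy : bil G y y = q + q).

Lemma tv_bil x z : bil G (x *m tv G e y q) (z *m tv G e y q) = bil G x z.
Proof.
rewrite !tvE !(bilDl, bilDr, bilBl, bilBr, bilNl, bilNr, bilZl, bilZr).
rewrite [bil G y z]bilC // [bil G e z]bilC // [bil G e y]bilC //.
rewrite hye hee hyy; ring.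
Qed.

Lemma tv_inv_aux (y' : 'rV[int]_n) : bil G y' e = 0 -> bil G y' y' = q + q ->
  forall x : 'rV[int]_n, x *m tv G e y' q *m tv G e (- y') q = x.
Proof.
move=> h1 h2 x.
have b1 : bil G (x *m tv G e y' q) e = bil G x e.
  by rewrite tvE !(bilDl, bilBl, bilNl, bilZl) h1 hee; ring.
have b2 : bil G (x *m tv G e y' q) (- y') = - (bil G x y' + (q + q) * bil G x e).
  rewrite tvE !(bilNr, bilDl, bilBl, bilNl, bilZl) h2 [bil G e y']bilC // h1; ring.
rewrite [_ *m tv G e (- y') q]tvE b1 b2 tvE.
apply/matrixP => i j; rewrite !mxE; ring.
Qed.

Lemma tv_isom : isom G (tv G e y q) (tv G e (- y) q).
Proof.
have h1 : bil G (- y) e = 0 by rewrite bilNl hye oppr0.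
have h2 : bil G (- y) (- y) = q + q by rewrite bilNl bilNr opprK.
split.
- by apply: mx_ext_row => x; rewrite mulmx1 mulmxA tv_inv_aux.
- apply: mx_ext_row => x; rewrite mulmx1 mulmxA.
  by rewrite -{2}(opprK y) tv_inv_aux // opprK.
- apply: mx_ext_bil => x z.
  rewrite -tv_bil /bil trmx_mul.
  by rewrite !mulmxA.
Qed.

Lemma reach_tv x : Reach G x (x + bil G x e *: y - bil G x y *: e - (q * bil G x e) *: e).
Proof. by exists (tv G e y q), (tv G e (- y) q); split; [apply: tv_isom | rewrite tvE]. Qed.
End TV.

Section Transport.
Variables (n : nat) (G : 'M[int]_n) (r r0 : 'rV[int]_n).
Hypothesis hR : Reach G r r0.

Lemma reach_bil : bil G r0 r0 = bil G r r.
Proof. by case: hR => g [h [[_ _ gG] ->]]; rewrite isom_bil. Qed.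

Lemma reach_div m : is_div G r m -> is_div G r0 m.
Proof.
case: hR => g [h [[gh hg gG] ->]] [m0 [hd [x hx]]].
split=> //; split.
- move=> z; have -> : z = (z *m h) *m g by rewrite -mulmxA hg mulmx1.
  by rewrite isom_bil.
- by exists (x *m g); rewrite isom_bil.
Qed.

Lemma reach_perp k (H : 'M[int]_k) : perp_iso G r0 H -> perp_iso G r H.
Proof.
case: hR => g [h [[gh hg gG] ->]] [B0 [i0 [s0 g0]]].
have hG : h *m G *m h^T = G by case: (isom_inv (And3 gh hg gG)).
exists (B0 *m h); split; [|split].
- move=> c hc; apply: i0.
  by rewrite -(mulmx1 (c *m B0)) -hg mulmxA -(mulmxA c) hc mul0mx.
- move=> x; rewrite -(isom_bil r x gG) s0; split=> [[c hc]|[c hc]]; exists c.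
  + by rewrite -(mulmx1 x) -gh mulmxA hc mulmxA.
  + by rewrite hc -!mulmxA hg mulmx1.
- have -> : B0 *m h *m G *m (B0 *m h)^T = B0 *m (h *m G *m h^T) *m B0^T.
    by rewrite trmx_mul !mulmxA.
  by rewrite hG.
Qed.
End Transport.

Lemma perp_cong n k (G : 'M[int]_n) r (H : 'M[int]_k) (P Q : 'M[int]_k) :
  P *m Q = 1%:M -> Q *m P = 1%:M -> perp_iso G r H -> perp_iso G r (P *m H *m P^T).
Proof.
move=> PQ QP [B [i0 [s0 g0]]]; exists (P *m B); split; [|split].
- move=> c hc; rewrite -(mulmx1 c) -PQ mulmxA (i0 (c *m P)) ?mul0mx //.
  by rewrite -mulmxA.
- move=> x; rewrite s0; split=> [[c ->]|[c ->]].
  + by exists (c *m Q); rewrite -mulmxA [Q *m (P *m B)]mulmxA QP mul1mx.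
  + by exists (c *m P); rewrite mulmxA.
- by rewrite -g0 trmx_mul !mulmxA.
Qed.


Definition E8inv_l : seq (seq int) :=
 [:: [:: -2; -3; -4; -5; -6; -4; -2; -3];
 [:: -3; -6; -8; -10; -12; -8; -4; -6];
 [:: -4; -8; -12; -15; -18; -12; -6; -9];
 [:: -5; -10; -15; -20; -24; -16; -8; -12];
 [:: -6; -12; -18; -24; -30; -20; -10; -15];
 [:: -4; -8; -12; -16; -20; -14; -7; -10];
 [:: -2; -4; -6; -8; -10; -7; -4; -5];
 [:: -3; -6; -9; -12; -15; -10; -5; -8]].
Definition E8inv : 'M[int]_8 := \matrix_(i, j) nth 0 (nth [::] E8inv_l i) j.

Lemma E8inv_ok : E8m *m E8inv = 1%:M.
Proof.
apply/matrixP => i j; rewrite !mxE.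
rewrite !big_ord_recr big_ord0 /= !mxE.
by case: i => [[|[|[|[|[|[|[|[|//]]]]]]]] Hi] /=; case: j => [[|[|[|[|[|[|[|[|//]]]]]]]] Hj] /=; vm_compute.
Qed.

Lemma E8sym : E8m^T = E8m.
Proof.
apply/matrixP => i j; rewrite !mxE.
by case: i => [[|[|[|[|[|[|[|[|//]]]]]]]] Hi] /=; case: j => [[|[|[|[|[|[|[|[|//]]]]]]]] Hj] /=; vm_compute.
Qed.

Definition E8S : 'M[int]_8 :=
  \matrix_(i, j) (if (i < j)%N then E8m i j else if i == j then -1 else 0).

Lemma E8S_ok : E8m = E8S + E8S^T.
Proof.
apply/matrixP => i j; rewrite !mxE.
by case: i => [[|[|[|[|[|[|[|[|//]]]]]]]] Hi] /=; case: j => [[|[|[|[|[|[|[|[|//]]]]]]]] Hj] /=; vm_compute.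
Qed.

Lemma E8even k : exists q, bil E8m k k = q + q.
Proof.
exists (bil E8S k k); rewrite E8S_ok /bil mulmxDr mulmxDl mxE; congr (_ + _).
have h : (k *m E8S *m k^T)^T = k *m E8S^T *m k^T by rewrite !trmx_mul trmxK mulmxA.
by rewrite -h [LHS]mxE.
Qed.

Lemma bil_delta n (G : 'M[int]_n) x j : bil G x (delta_mx 0 j) = (x *m G) 0 j.
Proof. by rewrite /bil trmx_delta -colE mxE. Qed.

Lemma E8unimod (m : int) k : (forall l, (m %| bil E8m k l)%Z) -> exists k', k = m *: k'.
Proof.
move=> h.
pose m' : 'rV[int]_8 := \row_j (divz ((k *m E8m) 0 j) m).
exists (m' *m E8inv).
have e1 : k *m E8m = m *: m'.
  apply/matrixP => i j; rewrite (ord1 i) [RHS]mxE [m' _ _]mxE mulrC divzK //.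
  by have := h (delta_mx (0 : 'I_1) j); rewrite bil_delta.
by rewrite scalemxAl -e1 -mulmxA E8inv_ok mulmx1.
Qed.

Lemma E8nondeg k : k != 0 -> exists l, bil E8m k l != 0.
Proof.
move=> hk; apply: NNPP => h0.
have [k' hk'] : exists k', k = 0 *: k'.
  apply: E8unimod => l; case: (eqVneq (bil E8m k l) 0) => [->|hl] //.
  by case: h0; exists l.
by move: hk; rewrite hk' scale0r eqxx.
Qed.


Definition mk5 p (u1 u2 : 'M[int]_(p,2)) (k1 k2 : 'M[int]_(p,8)) (z : 'M[int]_(p,1))
  : 'M[int]_(p, 2 + 2 + 8 + 8 + 1) := row_mx (row_mx (row_mx (row_mx u1 u2) k1) k2) z.

Lemma gr_mk5 d p q u1 u2 k1 k2 z v1 v2 l1 l2 w :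
  gr (L2d d) (@mk5 p u1 u2 k1 k2 z) (@mk5 q v1 v2 l1 l2 w) =
  gr Ugram u1 v1 + gr Ugram u2 v2 + gr E8m k1 l1 + gr E8m k2 l2
  + gr (rank1 (- (2 * d)%:Z)) z w.
Proof. by rewrite /mk5 /L2d !gr_dsum. Qed.

Lemma mk5_add p u1 u2 k1 k2 z u1' u2' k1' k2' z' :
  @mk5 p u1 u2 k1 k2 z + mk5 u1' u2' k1' k2' z' =
  mk5 (u1 + u1') (u2 + u2') (k1 + k1') (k2 + k2') (z + z').
Proof. by rewrite /mk5 !add_row_mx. Qed.
Lemma mk5_scale p c u1 u2 k1 k2 z :
  c *: @mk5 p u1 u2 k1 k2 z = mk5 (c *: u1) (c *: u2) (c *: k1) (c *: k2) (c *: z).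
Proof. by rewrite /mk5 !scale_row_mx. Qed.
Lemma mk5_opp p u1 u2 k1 k2 z :
  - @mk5 p u1 u2 k1 k2 z = mk5 (- u1) (- u2) (- k1) (- k2) (- z).
Proof. by rewrite /mk5 !opp_row_mx. Qed.
Lemma mk5_0 p : @mk5 p 0 0 0 0 0 = 0.
Proof. by rewrite /mk5 !row_mx0. Qed.
Lemma mk5_mul p q (c : 'M[int]_(p, q)) u1 u2 k1 k2 z :
  c *m mk5 u1 u2 k1 k2 z = mk5 (c *m u1) (c *m u2) (c *m k1) (c *m k2) (c *m z).
Proof. by rewrite /mk5 !mul_mx_row. Qed.
Lemma mk5_inj p u1 u2 k1 k2 z u1' u2' k1' k2' z' :
  @mk5 p u1 u2 k1 k2 z = mk5 u1' u2' k1' k2' z' ->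
  [/\ u1 = u1', u2 = u2', k1 = k1', k2 = k2' & z = z'].
Proof.
rewrite /mk5 => /eq_row_mx [/eq_row_mx [/eq_row_mx [/eq_row_mx [-> ->] ->] ->] ->].
by [].
Qed.
Lemma mk5_surj p (x : 'M[int]_(p, 2 + 2 + 8 + 8 + 1)) :
  exists u1 u2 k1 k2 z, x = mk5 u1 u2 k1 k2 z.
Proof.
exists (lsubmx (lsubmx (lsubmx (lsubmx x)))), (rsubmx (lsubmx (lsubmx (lsubmx x)))),
  (rsubmx (lsubmx (lsubmx x))), (rsubmx (lsubmx x)), (rsubmx x).
by rewrite /mk5 !hsubmxK.
Qed.

Definition uv (a b : int) : 'rV[int]_2 := \row_(i < 2) (if (i : nat) == 0%N then a else b).

Lemma uv_surj (u : 'rV[int]_2) : u = uv (u 0 0) (u 0 1).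
Proof.
apply/matrixP => i j; rewrite (ord1 i) !mxE.
by case: j => [[|[|//]] ?] /=; congr (u _ _); apply/val_inj.
Qed.
Lemma uv_add a b a' b' : uv a b + uv a' b' = uv (a + a') (b + b').
Proof. by apply/matrixP => i j; rewrite !mxE; case: ifP. Qed.
Lemma uv_scale c a b : c *: uv a b = uv (c * a) (c * b).
Proof. by apply/matrixP => i j; rewrite !mxE; case: ifP. Qed.
Lemma uv_opp a b : - uv a b = uv (- a) (- b).
Proof. by apply/matrixP => i j; rewrite !mxE; case: ifP. Qed.
Lemma uv0 : uv 0 0 = 0.
Proof. by apply/matrixP => i j; rewrite !mxE; case: ifP. Qed.
Lemma uv_inj a b a' b' : uv a b = uv a' b' -> a = a' /\ b = b'.
Proof.
move=> h; have h0 := congr1 (fun u : 'rV[int]_2 => u 0 0) h.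
have h1 := congr1 (fun u : 'rV[int]_2 => u 0 1) h.
by move: h0 h1; rewrite !mxE.
Qed.

Lemma bilU a b a' b' : bil Ugram (uv a b) (uv a' b') = a * b' + b * a'.
Proof.
rewrite /bil !mxE !big_ord_recr !big_ord0 /= !mxE !big_ord_recr !big_ord0 /= !mxE /=.
ring.
Qed.

Lemma bilR m z w : bil (rank1 m) (z%:M) (w%:M) = z * m * w.
Proof.
by rewrite /bil /rank1 tr_scalar_mx -!scalar_mxM mxE.
Qed.

Lemma addE p q (A B : 'M[int]_(p, q)) i j : (A + B) i j = A i j + B i j.
Proof. by rewrite mxE. Qed.

Definition st (a b c d : int) (k1 k2 : 'rV[int]_8) (z : int) : 'rV[int]_(2 + 2 + 8 + 8 + 1) :=
  mk5 (uv a b) (uv c d) k1 k2 (z%:M).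

Lemma bil_st dd a b c d k1 k2 z a' b' c' d' l1 l2 z' :
  bil (L2d dd) (st a b c d k1 k2 z) (st a' b' c' d' l1 l2 z') =
  a * b' + b * a' + c * d' + d * c' + bil E8m k1 l1 + bil E8m k2 l2
  - (2 * dd)%:Z * z * z'.
Proof.
rewrite bil_gr /st gr_mk5 !addE -!bil_gr !bilU bilR.
rewrite -[(2 * dd)%:Z]/(Posz (2 * dd)); ring.
Qed.

Lemma st_add a b c d k1 k2 z a' b' c' d' l1 l2 z' :
  st a b c d k1 k2 z + st a' b' c' d' l1 l2 z' =
  st (a + a') (b + b') (c + c') (d + d') (k1 + l1) (k2 + l2) (z + z').
Proof. by rewrite /st mk5_add !uv_add raddfD. Qed.
Lemma st_scale x a b c d k1 k2 z :
  x *: st a b c d k1 k2 z = st (x * a) (x * b) (x * c) (x * d) (x *: k1) (x *: k2) (x * z).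
Proof. by rewrite /st mk5_scale !uv_scale scale_scalar_mx. Qed.
Lemma st_opp a b c d k1 k2 z :
  - st a b c d k1 k2 z = st (- a) (- b) (- c) (- d) (- k1) (- k2) (- z).
Proof. by rewrite /st mk5_opp !uv_opp raddfN. Qed.
Lemma st_inj a b c d k1 k2 z a' b' c' d' l1 l2 z' :
  st a b c d k1 k2 z = st a' b' c' d' l1 l2 z' ->
  [/\ a = a', b = b', c = c' & d = d'] /\ [/\ k1 = l1, k2 = l2 & z = z'].
Proof.
rewrite /st => /mk5_inj [/uv_inj [-> ->] /uv_inj [-> ->] -> ->] h.
by split => //; split => //; move: (congr1 (fun m : 'M[int]_1 => m 0 0) h); rewrite !mxE.
Qed.
Lemma st_surj (x : 'rV[int]_(2 + 2 + 8 + 8 + 1)) :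
  exists a b c d k1 k2 z, x = st a b c d k1 k2 z.
Proof.
have [u1 [u2 [k1 [k2 [z ->]]]]] := mk5_surj x.
exists (u1 0 0), (u1 0 1), (u2 0 0), (u2 0 1), k1, k2, (z 0 0).
by rewrite /st -!uv_surj -mx11_scalar.
Qed.

Lemma L2d_sym dd : (L2d dd)^T = L2d dd.
Proof.
have hU : Ugram^T = Ugram by apply/matrixP => i j; rewrite !mxE eq_sym.
rewrite /L2d /dsum !tr_block_mx !trmx0 hU E8sym /rank1 tr_scalar_mx.
by [].
Qed.


Lemma reach_eq n (G : 'M[int]_n) x y y' : Reach G x y -> y = y' -> Reach G x y'.
Proof. by move=> h <-. Qed.

Section Moves.
Variable dd : nat.
Local Notation G := (L2d dd).

Ltac stsimp := rewrite ?bil_st ?bil0l ?bil0r ?st_scale ?st_opp ?st_add.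
Ltac stfin := congr st; rewrite ?scaler0 ?oppr0 ?addr0 ?scale0r //; try ring;
  by congr (_ + _ *: _); ring.

Lemma mv_gen e y q x : bil G e e = 0 -> bil G y e = 0 -> bil G y y = q + q ->
  Reach G x (x + bil G x e *: y - bil G x y *: e - (q * bil G x e) *: e).
Proof. by move=> h1 h2 h3; apply: reach_tv => //; apply: L2d_sym. Qed.

Lemma mv1 l a b c d k1 k2 z :
  Reach G (st a b c d k1 k2 z) (st (a - l * d) b (c + l * b) d k1 k2 z).
Proof.
apply: reach_eq (mv_gen (e := st 1 0 0 0 0 0 0) (y := st 0 0 l 0 0 0 0) (q := 0) _ _ _ _) _;
  stsimp; try ring.
stfin.
Qed.

Lemma mv2 l a b c d k1 k2 z :
  Reach G (st a b c d k1 k2 z) (st (a - l * c) b c (d + l * b) k1 k2 z).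
Proof.
apply: reach_eq (mv_gen (e := st 1 0 0 0 0 0 0) (y := st 0 0 0 l 0 0 0) (q := 0) _ _ _ _) _;
  stsimp; try ring.
stfin.
Qed.

Lemma mv3 l a b c d k1 k2 z :
  Reach G (st a b c d k1 k2 z) (st a (b - l * d) (c + l * a) d k1 k2 z).
Proof.
apply: reach_eq (mv_gen (e := st 0 1 0 0 0 0 0) (y := st 0 0 l 0 0 0 0) (q := 0) _ _ _ _) _;
  stsimp; try ring.
stfin.
Qed.

Lemma mv4 l a b c d k1 k2 z :
  Reach G (st a b c d k1 k2 z) (st a (b - l * c) c (d + l * a) k1 k2 z).
Proof.
apply: reach_eq (mv_gen (e := st 0 1 0 0 0 0 0) (y := st 0 0 0 l 0 0 0) (q := 0) _ _ _ _) _;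
  stsimp; try ring.
stfin.
Qed.

Lemma mv5 l1 l2 a b c d k1 k2 z : exists q,
  Reach G (st a b c d k1 k2 z)
    (st a (b - (bil E8m k1 l1 + bil E8m k2 l2) - q * a) c d (k1 + a *: l1) (k2 + a *: l2) z)
  /\ bil E8m l1 l1 + bil E8m l2 l2 = q + q.
Proof.
have [q1 h1] := E8even l1; have [q2 h2] := E8even l2.
exists (q1 + q2); split; last by rewrite h1 h2; ring.
apply: reach_eq (mv_gen (e := st 0 1 0 0 0 0 0) (y := st 0 0 0 0 l1 l2 0) (q := q1 + q2) _ _ _ _) _;
  stsimp; rewrite ?h1 ?h2; try ring.
congr st; rewrite ?scaler0 ?oppr0 ?addr0 ?scale0r //; try ring;
  by congr (_ + _ *: _); ring.
Qed.

Lemma mv7 l1 l2 a b c d k1 k2 z : exists q,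
  Reach G (st a b c d k1 k2 z)
    (st a b c (d - (bil E8m k1 l1 + bil E8m k2 l2) - q * c) (k1 + c *: l1) (k2 + c *: l2) z).
Proof.
have [q1 h1] := E8even l1; have [q2 h2] := E8even l2.
exists (q1 + q2).
apply: reach_eq (mv_gen (e := st 0 0 0 1 0 0 0) (y := st 0 0 0 0 l1 l2 0) (q := q1 + q2) _ _ _ _) _;
  stsimp; rewrite ?h1 ?h2; try ring.
congr st; rewrite ?scaler0 ?oppr0 ?addr0 ?scale0r //; try ring;
  by congr (_ + _ *: _); ring.
Qed.
End Moves.


Section Eichler.
Variables (dd : nat) (z : int).
Local Notation G := (L2d dd).

Definition goalP S := exists k t, Reach G S (st k (k * t) 0 0 0 0 z).

Lemma goal_back S S' : Reach G S S' -> goalP S' -> goalP S.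
Proof. by move=> h [k [t h']]; exists k, t; apply: reach_trans h h'. Qed.

Lemma to_c a b c d k1 k2 :
  Reach G (st a b c d k1 k2 z) (st (- c) (b - 1 * d) (c + 1 * a) (d + 1 * (b - 1 * d)) k1 k2 z).
Proof.
apply: reach_trans (mv3 dd 1 _ _ _ _ _ _ _) _.
by apply: reach_eq (mv2 dd 1 _ _ _ _ _ _ _) _; congr st; ring.
Qed.

Lemma to_d a b c d k1 k2 :
  Reach G (st a b c d k1 k2 z) (st (- d) (b - 1 * c) (c + 1 * (b - 1 * c)) (d + 1 * a) k1 k2 z).
Proof.
apply: reach_trans (mv4 dd 1 _ _ _ _ _ _ _) _.
by apply: reach_eq (mv1 dd 1 _ _ _ _ _ _ _) _; congr st; ring.
Qed.

Lemma modz_facts c a : a != 0 -> ~~ (a %| c)%Z ->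
  (- (c %% a)%Z != 0) /\ (absz (- (c %% a)%Z) < absz a)%N.
Proof.
move=> a0 hc.
have h1 := modz_ge0 c a0; have h2 := ltz_mod c a0.
have h3 : (c %% a)%Z != 0 by apply/eqP => /dvdz_mod0P; apply/negP.
split; first by rewrite oppr_eq0.
lia.
Qed.

Lemma red_c a b c d k1 k2 : a != 0 -> ~~ (a %| c)%Z ->
  exists a' b' c' d', Reach G (st a b c d k1 k2 z) (st a' b' c' d' k1 k2 z)
    /\ a' != 0 /\ (absz a' < absz a)%N.
Proof.
move=> a0 hc; have [h1 h2] := modz_facts a0 hc.
do 4 eexists; split; last by split; [exact: h1 | exact: h2].
apply: reach_trans (mv3 dd (- (c %/ a)%Z) _ _ _ _ _ _ _) _.
have -> : c + - (c %/ a)%Z * a = (c %% a)%Z by rewrite {1}(divz_eq c a); ring.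
exact: to_c.
Qed.

Lemma red_d a b c d k1 k2 : a != 0 -> ~~ (a %| d)%Z ->
  exists a' b' c' d', Reach G (st a b c d k1 k2 z) (st a' b' c' d' k1 k2 z)
    /\ a' != 0 /\ (absz a' < absz a)%N.
Proof.
move=> a0 hc; have [h1 h2] := modz_facts a0 hc.
do 4 eexists; split; last by split; [exact: h1 | exact: h2].
apply: reach_trans (mv4 dd (- (d %/ a)%Z) _ _ _ _ _ _ _) _.
have -> : d + - (d %/ a)%Z * a = (d %% a)%Z by rewrite {1}(divz_eq d a); ring.
exact: to_d.
Qed.

Lemma descent n : forall a b c d k1 k2, (absz a <= n)%N -> a != 0 ->
  goalP (st a b c d k1 k2 z).
Proof.
elim: n => [|n IH] a b c d k1 k2 ha a0.
  by move: a0 ha; case: a => [[|m]|m].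
have IH' : forall a' b' c' d' k1' k2', a' != 0 -> (absz a' < absz a)%N ->
    goalP (st a' b' c' d' k1' k2' z).
  by move=> a' b' c' d' k1' k2' h1 h2; apply: IH => //; lia.
have redc : forall b c d k1 k2, ~~ (a %| c)%Z -> goalP (st a b c d k1 k2 z).
  move=> b' c' d' k1' k2' hc; have [a2 [b2 [c2 [d2 [R [h1 h2]]]]]] := red_c b' d' k1' k2' a0 hc.
  by apply: goal_back R _; apply: IH'.
have redd : forall b c d k1 k2, ~~ (a %| d)%Z -> goalP (st a b c d k1 k2 z).
  move=> b' c' d' k1' k2' hc; have [a2 [b2 [c2 [d2 [R [h1 h2]]]]]] := red_d b' c' k1' k2' a0 hc.
  by apply: goal_back R _; apply: IH'.
case: (boolP (a %| c)%Z) => hc; last exact: redc.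
case: (boolP (a %| d)%Z) => hd; last exact: redd.
pose b1 := b + (c %/ a)%Z * d.
have R1 : Reach G (st a b c d k1 k2 z) (st a b1 0 d k1 k2 z).
  apply: reach_eq (mv3 dd (- (c %/ a)%Z) _ _ _ _ _ _ _) _; congr st.
    by rewrite /b1; ring.
  by rewrite -{1}(divzK hc); ring.
apply: goal_back R1 _.
case: (boolP (a %| d + b1)%Z) => hdb; last first.
  apply: goal_back (mv2 dd 1 _ _ _ _ _ _ _) _.
  by rewrite mulr0 subr0 mul1r; apply: redd.
have hb1 : (a %| b1)%Z by rewrite -(rpredDl _ hd).
case: (classic (exists l1 l2, ~~ (a %| d - (bil E8m k1 l1 + bil E8m k2 l2))%Z)).
  move=> [l1 [l2 hl]]; have [q R3] := mv7 dd l1 l2 a b1 0 d k1 k2 z.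
  apply: goal_back R3 _; rewrite mulr0 subr0 !scale0r !addr0.
  exact: redd.
move=> hK.
have hK' : forall l1 l2, (a %| bil E8m k1 l1 + bil E8m k2 l2)%Z.
  move=> l1 l2; apply: NNPP => hn; apply: hK; exists l1, l2.
  apply/negP => h; apply: hn.
  by move: h; rewrite (rpredBl _ hd).
have [x1 hx1] : exists x1, k1 = a *: x1.
  by apply: E8unimod => l; have := hK' l 0; rewrite bil0r addr0.
have [x2 hx2] : exists x2, k2 = a *: x2.
  by apply: E8unimod => l; have := hK' 0 l; rewrite bil0r add0r.
have R4 : Reach G (st a b1 0 d k1 k2 z) (st a b1 0 0 k1 k2 z).
  apply: reach_eq (mv4 dd (- (d %/ a)%Z) _ _ _ _ _ _ _) _; congr st.
    by ring.
  by rewrite -{1}(divzK hd); ring.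
apply: goal_back R4 _.
have [q [R5 hq]] := mv5 dd (- x1) (- x2) a b1 0 0 k1 k2 z.
exists a, ((b1 %/ a)%Z + q).
apply: reach_eq R5 _.
rewrite !bilNl !bilNr !opprK in hq.
congr st.
- rewrite hx1 hx2 !bilZl !bilNr.
  have -> : bil E8m x1 x1 = q + q - bil E8m x2 x2 by rewrite -hq; ring.
  by rewrite -{1}(divzK hb1); ring.
- by rewrite hx1 scalerN addrN.
- by rewrite hx2 scalerN addrN.
Qed.

Lemma from_a a b c d k1 k2 : a != 0 -> goalP (st a b c d k1 k2 z).
Proof. by move=> a0; apply: (@descent (absz a)). Qed.

Lemma from_c a b c d k1 k2 : c != 0 -> goalP (st a b c d k1 k2 z).
Proof.
move=> c0; apply: goal_back (to_c _ _ _ _ _ _) _.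
by apply: from_a; rewrite oppr_eq0.
Qed.

Lemma from_d a b c d k1 k2 : d != 0 -> goalP (st a b c d k1 k2 z).
Proof.
move=> c0; apply: goal_back (to_d _ _ _ _ _ _) _.
by apply: from_a; rewrite oppr_eq0.
Qed.

Lemma eichler a b c d k1 k2 : goalP (st a b c d k1 k2 z).
Proof.
case: (eqVneq a 0) => [->|a0]; last exact: from_a.
case: (eqVneq c 0) => [->|c0]; last exact: from_c.
case: (eqVneq d 0) => [->|d0]; last exact: from_d.
case: (eqVneq b 0) => [->|b0].
  case: (eqVneq k1 0) => [->|k10].
    case: (eqVneq k2 0) => [->|k20].
      by exists 0, 0; apply: reach_eq (reach_refl _ _) _; congr st; ring.
    have [l hl] := E8nondeg k20.
    have [q R] := mv7 dd 0 l 0 0 0 0 0 k2 z.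
    apply: goal_back R _; apply: from_d.
    by rewrite mulr0 subr0 sub0r oppr_eq0 bil0l add0r.
  have [l hl] := E8nondeg k10.
  have [q R] := mv7 dd l 0 0 0 0 0 k1 k2 z.
  apply: goal_back R _; apply: from_d.
  by rewrite mulr0 subr0 sub0r oppr_eq0 bil0r addr0.
apply: goal_back (mv2 dd 1 _ _ _ _ _ _ _) _; apply: from_d.
by rewrite mul1r add0r.
Qed.
End Eichler.


Definition U2B : 'M[int]_(2, 2 + 2 + 8 + 8 + 1) := mk5 0 1%:M 0 0 0.
Definition E1B : 'M[int]_(8, 2 + 2 + 8 + 8 + 1) := mk5 0 0 1%:M 0 0.
Definition E2B : 'M[int]_(8, 2 + 2 + 8 + 8 + 1) := mk5 0 0 0 1%:M 0.

Section Shapes.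
Variable dd : nat.
Local Notation G := (L2d dd).

Lemma gr11 n (M : 'M[int]_n) : gr M (1%:M : 'M_n) (1%:M : 'M_n) = M.
Proof. by rewrite /gr mul1mx trmx1 mulmx1. Qed.

Ltac leaf := rewrite /U2B /E1B /E2B /st ?uv0 gr_mk5 ?gr0l ?gr0r ?gr11 ?addr0 ?add0r.

Lemma gUU : gr G U2B U2B = Ugram. Proof. by leaf. Qed.
Lemma gE1 : gr G E1B E1B = E8m. Proof. by leaf. Qed.
Lemma gE2 : gr G E2B E2B = E8m. Proof. by leaf. Qed.
Lemma gUE1 : gr G U2B E1B = 0. Proof. by leaf. Qed.
Lemma gUE2 : gr G U2B E2B = 0. Proof. by leaf. Qed.
Lemma gE1U : gr G E1B U2B = 0. Proof. by leaf. Qed.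
Lemma gE2U : gr G E2B U2B = 0. Proof. by leaf. Qed.
Lemma gE12 : gr G E1B E2B = 0. Proof. by leaf. Qed.
Lemma gE21 : gr G E2B E1B = 0. Proof. by leaf. Qed.
Lemma gwU a b z : gr G (st a b 0 0 0 0 z) U2B = 0. Proof. by leaf. Qed.
Lemma gwE1 a b z : gr G (st a b 0 0 0 0 z) E1B = 0. Proof. by leaf. Qed.
Lemma gwE2 a b z : gr G (st a b 0 0 0 0 z) E2B = 0. Proof. by leaf. Qed.
Lemma gUw a b z : gr G U2B (st a b 0 0 0 0 z) = 0. Proof. by leaf. Qed.
Lemma gE1w a b z : gr G E1B (st a b 0 0 0 0 z) = 0. Proof. by leaf. Qed.
Lemma gE2w a b z : gr G E2B (st a b 0 0 0 0 z) = 0. Proof. by leaf. Qed.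
Lemma gww (x y : 'rV[int]_(2 + 2 + 8 + 8 + 1)) : gr G x y = (bil G x y)%:M.
Proof. by rewrite bil_gr -mx11_scalar. Qed.

Lemma bil_mulB n k (M : 'M[int]_n) r (c : 'rV[int]_k) (B : 'M[int]_(k, n)) :
  bil M r (c *m B) = (gr M r B *m c^T) 0 0.
Proof. by rewrite /bil /gr trmx_mul !mulmxA. Qed.

Lemma sc0 : (0 : int)%:M = 0 :> 'M[int]_1.
Proof. by apply/matrixP => i j; rewrite !mxE mul0rn. Qed.

Lemma U2B_mul (c : 'rV[int]_2) : c *m U2B = st 0 0 (c 0 0) (c 0 1) 0 0 0.
Proof. by rewrite /U2B /st mk5_mul !mulmx0 mulmx1 -uv_surj uv0 sc0. Qed.
Lemma E1B_mul (c : 'rV[int]_8) : c *m E1B = st 0 0 0 0 c 0 0.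
Proof. by rewrite /E1B /st mk5_mul !mulmx0 mulmx1 !uv0 sc0. Qed.
Lemma E2B_mul (c : 'rV[int]_8) : c *m E2B = st 0 0 0 0 0 c 0.
Proof. by rewrite /E2B /st mk5_mul !mulmx0 mulmx1 !uv0 sc0. Qed.

Lemma row11 (c1 : 'rV[int]_1) (w : 'rV[int]_(2 + 2 + 8 + 8 + 1)) : c1 *m w = c1 0 0 *: w.
Proof. exact: scal11. Qed.
End Shapes.


Lemma blk11 (a b c d : int) : block_mx (a%:M : 'M[int]_1) b%:M c%:M d%:M =
  \matrix_(i < 1 + 1, j < 1 + 1) (if (i : nat) == 0%N then (if (j : nat) == 0%N then a else b)
                                 else if (j : nat) == 0%N then c else d).
Proof.
apply/matrixP => i j; rewrite [RHS]mxE.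
case: (splitP i) => i' ei; case: (splitP j) => j' ej.
- have -> : i = lshift 1 i' by apply/val_inj.
  have -> : j = lshift 1 j' by apply/val_inj.
  by rewrite block_mxEul (ord1 i') (ord1 j') !mxE.
- have -> : i = lshift 1 i' by apply/val_inj.
  have -> : j = rshift 1 j' by apply/val_inj.
  by rewrite block_mxEur (ord1 i') (ord1 j') !mxE.
- have -> : i = rshift 1 i' by apply/val_inj.
  have -> : j = lshift 1 j' by apply/val_inj.
  by rewrite block_mxEdl (ord1 i') (ord1 j') !mxE.
- have -> : i = rshift 1 i' by apply/val_inj.
  have -> : j = rshift 1 j' by apply/val_inj.
  by rewrite block_mxEdr (ord1 i') (ord1 j') !mxE.
Qed.

Lemma Ublock : block_mx (0%:M : 'M[int]_1) 1%:M 1%:M 0%:M = Ugram :> 'M_(1 + 1).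
Proof.
rewrite blk11; apply/matrixP => i j; rewrite !mxE.
by case: i => [[|[|//]] Hi]; case: j => [[|[|//]] Hj].
Qed.

Lemma U2block : block_mx (0%:M : 'M[int]_1) 2%:M 2%:M 0%:M = U2gram :> 'M_(1 + 1).
Proof.
rewrite blk11; apply/matrixP => i j; rewrite !mxE.
by case: i => [[|[|//]] Hi]; case: j => [[|[|//]] Hj].
Qed.

Lemma st0 : st 0 0 0 0 0 0 0 = 0.
Proof. by rewrite /st !uv0 sc0 mk5_0. Qed.

Lemma sc11 (c : int) : (c%:M : 'M[int]_1) 0 0 = c.
Proof. by rewrite mxE eqxx mulr1n. Qed.

Lemma col_mx_eq0 m1 m2 n (A : 'M[int]_(m1, n)) (B : 'M[int]_(m2, n)) :
  A = 0 -> B = 0 -> col_mx A B = 0.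
Proof. by move=> -> ->; rewrite col_mx0. Qed.

Section Shape.
Variable dd : nat.
Local Notation G := (L2d dd).

Definition Hspan (k l z a1 b1 z1 a2 b2 z2 : int) :=
  forall a b zz, bil G (st k l 0 0 0 0 z) (st a b 0 0 0 0 zz) = 0 <->
   exists c1 c2, [/\ a = c1 * a1 + c2 * a2, b = c1 * b1 + c2 * b2 & zz = c1 * z1 + c2 * z2].
Definition Hind (a1 b1 z1 a2 b2 z2 : int) :=
  forall c1 c2, c1 * a1 + c2 * a2 = 0 -> c1 * b1 + c2 * b2 = 0 -> c1 * z1 + c2 * z2 = 0 ->
   c1 = 0 /\ c2 = 0.

Lemma bil_r0_red k l z a b c d k1 k2 zz :
  bil G (st k l 0 0 0 0 z) (st a b c d k1 k2 zz) = bil G (st k l 0 0 0 0 z) (st a b 0 0 0 0 zz).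
Proof. by rewrite !bil_st !bil0l; ring. Qed.

Lemma comb_st c1 c2 a1 b1 z1 a2 b2 z2 :
  c1 *: st a1 b1 0 0 0 0 z1 + c2 *: st a2 b2 0 0 0 0 z2 =
  st (c1 * a1 + c2 * a2) (c1 * b1 + c2 * b2) 0 0 0 0 (c1 * z1 + c2 * z2).
Proof. by rewrite !st_scale st_add !mulr0 !scaler0 !addr0. Qed.

Lemma span_w k l z a1 b1 z1 a2 b2 z2 : Hspan k l z a1 b1 z1 a2 b2 z2 ->
  bil G (st k l 0 0 0 0 z) (st a1 b1 0 0 0 0 z1) = 0 /\
  bil G (st k l 0 0 0 0 z) (st a2 b2 0 0 0 0 z2) = 0.
Proof.
move=> hs; split; apply/hs.
  by exists 1, 0; split; ring.
by exists 0, 1; split; ring.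
Qed.

Lemma shape1 k l z a1 b1 z1 a2 b2 z2 :
  Hspan k l z a1 b1 z1 a2 b2 z2 -> Hind a1 b1 z1 a2 b2 z2 ->
  bil G (st a1 b1 0 0 0 0 z1) (st a1 b1 0 0 0 0 z1) = 0 ->
  bil G (st a1 b1 0 0 0 0 z1) (st a2 b2 0 0 0 0 z2) = 1 ->
  bil G (st a2 b2 0 0 0 0 z2) (st a1 b1 0 0 0 0 z1) = 1 ->
  bil G (st a2 b2 0 0 0 0 z2) (st a2 b2 0 0 0 0 z2) = 0 ->
  perp_iso G (st k l 0 0 0 0 z) (dsum (dsum (dsum Ugram Ugram) E8m) E8m).
Proof.
move=> hs hi g11 g12 g21 g22.
have [o1 o2] := span_w hs.
set w1 := st a1 b1 0 0 0 0 z1; set w2 := st a2 b2 0 0 0 0 z2.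
exists (col_mx (col_mx (col_mx (col_mx w1 w2) U2B) E1B) E2B); split; [|split].
- move=> c hc.
  have [c1 [c2 [cu [ck1 [ck2 ec]]]]] : exists (c1 c2 : 'rV[int]_1) (cu : 'rV[int]_2)
      (ck1 ck2 : 'rV[int]_8), c = row_mx (row_mx (row_mx (row_mx c1 c2) cu) ck1) ck2.
    pose c' : 'rV[int]_(1 + 1 + 2 + 8 + 8) := c.
    exists (lsubmx (lsubmx (lsubmx (lsubmx c')))), (rsubmx (lsubmx (lsubmx (lsubmx c')))),
      (rsubmx (lsubmx (lsubmx c'))), (rsubmx (lsubmx c')), (rsubmx c').
    by rewrite !hsubmxK.
  move: hc; rewrite ec !mul_row_col.
  rewrite [row_mx c1 c2 *m _]mul_row_col.
  rewrite !row11 U2B_mul E1B_mul E2B_mul /w1 /w2 comb_st.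
  rewrite !st_add !addr0 !add0r -st0 => /st_inj [[h1 h2 h3 h4] [h5 h6 h7]].
  have [e1 e2] := hi _ _ h1 h2 h7.
  rewrite (mx11_scalar c1) (mx11_scalar c2) e1 e2 sc0 (uv_surj cu) h3 h4 uv0 h5 h6.
  by rewrite !row_mx0.
- move=> x; have [a [b [cc [d [k1 [k2 [zz ->]]]]]]] := st_surj x.
  rewrite bil_r0_red; split.
  + move/hs => [c1 [c2 [ea eb ez]]].
    exists (row_mx (row_mx (row_mx (row_mx c1%:M c2%:M) (uv cc d)) k1) k2).
    rewrite !mul_row_col [row_mx _ _ *m col_mx w1 w2]mul_row_col !row11 U2B_mul E1B_mul E2B_mul /w1 /w2 comb_st !sc11.
    rewrite !st_add ea eb ez.
    have [-> ->] : (uv cc d) 0 0 = cc /\ (uv cc d) 0 1 = d by rewrite !mxE.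
    by congr st; rewrite ?addr0 ?add0r.
  + move=> [c ec].
    have : bil G (st k l 0 0 0 0 z) (st a b cc d k1 k2 zz) = 0.
      rewrite ec bil_mulB !gr_colR [gr _ _ (col_mx w1 w2)]gr_colR !gww o1 o2 gwU gwE1 gwE2 sc0 !row_mx0.
      by rewrite mul0mx mxE.
    by rewrite bil_r0_red.
- rewrite -[_ *m G *m _]/(gr G _ _).
  rewrite !gr_col [gr _ (col_mx w1 w2) (col_mx w1 w2)]gr_col !gr_colL !gr_colR.
  rewrite ![gr _ (col_mx w1 w2) _]gr_colL ![gr _ _ (col_mx w1 w2)]gr_colR.
  rewrite !gww g11 g12 g21 g22 Ublock.
  rewrite gUU gE1 gE2 gUE1 gUE2 gE1U gE2U gE12 gE21 /w1 /w2 !gwU !gwE1 !gwE2 !gUw !gE1w !gE2w.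
  by rewrite ?sc0 !col_mx0 !row_mx0.
Qed.
Lemma shape2 k l z a1 b1 z1 a2 b2 z2 :
  Hspan k l z a1 b1 z1 a2 b2 z2 -> Hind a1 b1 z1 a2 b2 z2 ->
  bil G (st a1 b1 0 0 0 0 z1) (st a1 b1 0 0 0 0 z1) = 2 ->
  bil G (st a1 b1 0 0 0 0 z1) (st a2 b2 0 0 0 0 z2) = 0 ->
  bil G (st a2 b2 0 0 0 0 z2) (st a1 b1 0 0 0 0 z1) = 0 ->
  bil G (st a2 b2 0 0 0 0 z2) (st a2 b2 0 0 0 0 z2) = -2 ->
  perp_iso G (st k l 0 0 0 0 z) (dsum (dsum (dsum (dsum Ugram E8m) E8m) (rank1 2)) (rank1 (-2))).
Proof.
move=> hs hi g11 g12 g21 g22.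
have [o1 o2] := span_w hs.
set w1 := st a1 b1 0 0 0 0 z1; set w2 := st a2 b2 0 0 0 0 z2.
exists (col_mx (col_mx (col_mx (col_mx U2B E1B) E2B) w1) w2); split; [|split].
- move=> c hc.
  have [c1 [c2 [cu [ck1 [ck2 ec]]]]] : exists (c1 c2 : 'rV[int]_1) (cu : 'rV[int]_2)
      (ck1 ck2 : 'rV[int]_8), c = row_mx (row_mx (row_mx (row_mx cu ck1) ck2) c1) c2.
    pose c' : 'rV[int]_(2 + 8 + 8 + 1 + 1) := c.
    exists (rsubmx (lsubmx c')), (rsubmx c'),
      (lsubmx (lsubmx (lsubmx (lsubmx c')))), (rsubmx (lsubmx (lsubmx (lsubmx c')))),
      (rsubmx (lsubmx (lsubmx c'))).
    by rewrite !hsubmxK.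
  move: hc; rewrite ec !mul_row_col.
  rewrite !row11 U2B_mul E1B_mul E2B_mul /w1 /w2 !st_scale.
  rewrite !st_add !mulr0 !scaler0 !addr0 !add0r -st0 => /st_inj [[h1 h2 h3 h4] [h5 h6 h7]].
  have [e1 e2] := hi _ _ h1 h2 h7.
  rewrite (mx11_scalar c1) (mx11_scalar c2) e1 e2 sc0 (uv_surj cu) h3 h4 uv0 h5 h6.
  by rewrite !row_mx0.
- move=> x; have [a [b [cc [d [k1 [k2 [zz ->]]]]]]] := st_surj x.
  rewrite bil_r0_red; split.
  + move/hs => [c1 [c2 [ea eb ez]]].
    exists (row_mx (row_mx (row_mx (row_mx (uv cc d) k1) k2) c1%:M) c2%:M).
    rewrite !mul_row_col  !row11 U2B_mul E1B_mul E2B_mul /w1 /w2 !st_scale !sc11.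
    rewrite !st_add !mulr0 !scaler0 ea eb ez.
    have [-> ->] : (uv cc d) 0 0 = cc /\ (uv cc d) 0 1 = d by rewrite !mxE.
    by congr st; rewrite ?addr0 ?add0r.
  + move=> [c ec].
    have : bil G (st k l 0 0 0 0 z) (st a b cc d k1 k2 zz) = 0.
      rewrite ec bil_mulB !gr_colR !gww o1 o2 gwU gwE1 gwE2 sc0 !row_mx0.
      by rewrite mul0mx mxE.
    by rewrite bil_r0_red.
- rewrite -[_ *m G *m _]/(gr G _ _).
  rewrite !gr_col !gr_colL !gr_colR.
  rewrite !gww g11 g12 g21 g22.
  rewrite gUU gE1 gE2 gUE1 gUE2 gE1U gE2U gE12 gE21 /w1 /w2 !gwU !gwE1 !gwE2 !gUw !gE1w !gE2w.
  by rewrite ?sc0 !col_mx0 !row_mx0.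
Qed.
Lemma shape3 k l z a1 b1 z1 a2 b2 z2 :
  Hspan k l z a1 b1 z1 a2 b2 z2 -> Hind a1 b1 z1 a2 b2 z2 ->
  bil G (st a1 b1 0 0 0 0 z1) (st a1 b1 0 0 0 0 z1) = 0 ->
  bil G (st a1 b1 0 0 0 0 z1) (st a2 b2 0 0 0 0 z2) = 2 ->
  bil G (st a2 b2 0 0 0 0 z2) (st a1 b1 0 0 0 0 z1) = 2 ->
  bil G (st a2 b2 0 0 0 0 z2) (st a2 b2 0 0 0 0 z2) = 0 ->
  perp_iso G (st k l 0 0 0 0 z) (dsum (dsum (dsum Ugram E8m) E8m) U2gram).
Proof.
move=> hs hi g11 g12 g21 g22.
have [o1 o2] := span_w hs.
set w1 := st a1 b1 0 0 0 0 z1; set w2 := st a2 b2 0 0 0 0 z2.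
exists (col_mx (col_mx (col_mx U2B E1B) E2B) (col_mx w1 w2)); split; [|split].
- move=> c hc.
  have [c1 [c2 [cu [ck1 [ck2 ec]]]]] : exists (c1 c2 : 'rV[int]_1) (cu : 'rV[int]_2)
      (ck1 ck2 : 'rV[int]_8), c = row_mx (row_mx (row_mx cu ck1) ck2) (row_mx c1 c2).
    pose c' : 'rV[int]_(2 + 8 + 8 + (1 + 1)) := c.
    exists (lsubmx (rsubmx c')), (rsubmx (rsubmx c')),
      (lsubmx (lsubmx (lsubmx c'))), (rsubmx (lsubmx (lsubmx c'))), (rsubmx (lsubmx c')).
    by rewrite !hsubmxK.
  move: hc; rewrite ec !mul_row_col.
  rewrite [row_mx c1 c2 *m _]mul_row_col.
  rewrite !row11 U2B_mul E1B_mul E2B_mul /w1 /w2 comb_st.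
  rewrite !st_add !addr0 !add0r -st0 => /st_inj [[h1 h2 h3 h4] [h5 h6 h7]].
  have [e1 e2] := hi _ _ h1 h2 h7.
  rewrite (mx11_scalar c1) (mx11_scalar c2) e1 e2 sc0 (uv_surj cu) h3 h4 uv0 h5 h6.
  by rewrite !row_mx0.
- move=> x; have [a [b [cc [d [k1 [k2 [zz ->]]]]]]] := st_surj x.
  rewrite bil_r0_red; split.
  + move/hs => [c1 [c2 [ea eb ez]]].
    exists (row_mx (row_mx (row_mx (uv cc d) k1) k2) (row_mx c1%:M c2%:M)).
    rewrite !mul_row_col [row_mx _ _ *m col_mx w1 w2]mul_row_col !row11 U2B_mul E1B_mul E2B_mul /w1 /w2 comb_st !sc11.
    rewrite !st_add ea eb ez.
    have [-> ->] : (uv cc d) 0 0 = cc /\ (uv cc d) 0 1 = d by rewrite !mxE.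
    by congr st; rewrite ?addr0 ?add0r.
  + move=> [c ec].
    have : bil G (st k l 0 0 0 0 z) (st a b cc d k1 k2 zz) = 0.
      rewrite ec bil_mulB !gr_colR [gr _ _ (col_mx w1 w2)]gr_colR !gww o1 o2 gwU gwE1 gwE2 sc0 !row_mx0.
      by rewrite mul0mx mxE.
    by rewrite bil_r0_red.
- rewrite -[_ *m G *m _]/(gr G _ _).
  rewrite !gr_col [gr _ (col_mx w1 w2) (col_mx w1 w2)]gr_col !gr_colL !gr_colR.
  rewrite ![gr _ (col_mx w1 w2) _]gr_colL ![gr _ _ (col_mx w1 w2)]gr_colR.
  rewrite !gww g11 g12 g21 g22 U2block.
  rewrite gUU gE1 gE2 gUE1 gUE2 gE1U gE2U gE12 gE21 /w1 /w2 !gwU !gwE1 !gwE2 !gUw !gE1w !gE2w.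
  rewrite ?sc0 !col_mx0 !row_mx0.
  match goal with |- block_mx _ ?X _ _ = _ =>
    have -> : X = 0 by apply: col_mx_eq0 => //; apply: col_mx_eq0 end.
  by [].
Qed.
End Shape.


Lemma Nlemma dd (K0 kp A t z u v p11 p12 p21 p22 : int) :
  K0 != 0 -> u * kp + v * A = 1 -> (2 * dd)%:Z * z = K0 * A ->
  (p11 * p22 - p12 * p21) * (p11 * p22 - p12 * p21) = 1 ->
  Hspan dd (K0 * kp) (K0 * kp * t) z p11 (- t * p11 + A * p12) (kp * p12)
     p21 (- t * p21 + A * p22) (kp * p22)
  /\ Hind p11 (- t * p11 + A * p12) (kp * p12) p21 (- t * p21 + A * p22) (kp * p22).
Proof.
move=> K0n huv hD hs; set s := p11 * p22 - p12 * p21 in hs.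
split.
- move=> a b zz; rewrite bil_st !bil0l hD.
  have -> : K0 * kp * b + K0 * kp * t * a + 0 * 0 + 0 * 0 + 0 + 0 - K0 * A * zz =
    K0 * (kp * (b + t * a) - A * zz) by ring.
  split.
  + move/eqP; rewrite mulf_eq0 (negbTE K0n) /= subr_eq0 => /eqP hX.
    pose e2 := u * zz + v * (b + t * a).
    have hk : kp * e2 = zz.
      transitivity ((u * kp + v * A) * zz + v * (kp * (b + t * a) - A * zz)).
        by rewrite /e2; ring.
      by rewrite hX huv subrr mulr0 addr0 mul1r.
    have hA : A * e2 = b + t * a.
      transitivity ((u * kp + v * A) * (b + t * a) - u * (kp * (b + t * a) - A * zz)).
        by rewrite /e2; ring.
      by rewrite hX huv subrr mulr0 subr0 mul1r.
    exists (s * (a * p22 - e2 * p21)), (s * (- a * p12 + e2 * p11)); split.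
    * transitivity (a * (s * s)); first by rewrite hs mulr1.
      by rewrite /s; ring.
    * transitivity ((- t * a + A * e2) * (s * s)); first by rewrite hs mulr1 hA; ring.
      by rewrite /s; ring.
    * transitivity (kp * e2 * (s * s)); first by rewrite hs mulr1 hk.
      by rewrite /s; ring.
  + move=> [c1 [c2 [-> -> ->]]]; ring.
- move=> c1 c2 h1 h2 h3.
  pose f2 := c1 * p12 + c2 * p22.
  have hA : A * f2 = 0.
    transitivity ((c1 * (- t * p11 + A * p12) + c2 * (- t * p21 + A * p22))
       + t * (c1 * p11 + c2 * p21)); first by rewrite /f2; ring.
    by rewrite h1 h2; ring.
  have hk : kp * f2 = 0 by rewrite -h3 /f2; ring.
  have hf : f2 = 0.
    transitivity ((u * kp + v * A) * f2); first by rewrite huv mul1r.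
    by rewrite mulrDl -!mulrA hA hk !mulr0 addr0.
  split.
  + transitivity (c1 * (s * s)); first by rewrite hs mulr1.
    transitivity (s * ((c1 * p11 + c2 * p21) * p22 - f2 * p21)); first by rewrite /s /f2; ring.
    by rewrite h1 hf; ring.
  + transitivity (c2 * (s * s)); first by rewrite hs mulr1.
    transitivity (s * (f2 * p11 - (c1 * p11 + c2 * p21) * p12)); first by rewrite /s /f2; ring.
    by rewrite h1 hf; ring.
Qed.

Definition Bf (al be ga x y x' y' : int) := al * x * x' + be * (x * y' + y * x') + ga * y * y'.

Lemma iso_vec (al be ga : int) : al * ga - be * be = -1 ->
  exists x y u v : int, Bf al be ga x y x y = 0 /\ u * x + v * y = 1.
Proof.
move=> hd.
case: (eqVneq al 0) => [->|a0].
  by exists 1, 0, 1, 0; split; rewrite /Bf; ring.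
have [u0 [v0 hb]] := Bezoutz (1 - be) al.
set g := gcdz (1 - be) al in hb.
have g0 : g != 0 by rewrite gcdz_eq0 negb_and a0 orbT.
have hxg : ((1 - be) %/ g)%Z * g = 1 - be by rewrite divzK // dvdz_gcdl.
have hyg : (al %/ g)%Z * g = al by rewrite divzK // dvdz_gcdr.
set x := ((1 - be) %/ g)%Z in hxg; set y := (al %/ g)%Z in hyg.
exists x, y, u0, v0; split.
- have e1 : al * x = y * (1 - be) by rewrite -hyg -hxg; ring.
  have : al * Bf al be ga x y x y = 0.
    transitivity (y * y * (1 - be * be + al * ga) +
      (al * x - y * (1 - be)) * (al * x + y * (1 - be) + 2 * be * y)).
      by rewrite /Bf; ring.
    have -> : 1 - be * be + al * ga = 0 by rewrite -[1](opprK 1) -hd; ring.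
    by rewrite e1 subrr mul0r mulr0 addr0.
  by move/eqP; rewrite mulf_eq0 (negbTE a0) => /eqP.
- apply: (mulIf g0); rewrite mul1r.
  transitivity (u0 * (x * g) + v0 * (y * g)); first by ring.
  by rewrite hxg hyg.
Qed.

Lemma binred (al be ga : int) : al * ga - be * be = -1 ->
  exists x y w1 w2 : int,
  [/\ (x * w2 - y * w1) * (x * w2 - y * w1) = 1, Bf al be ga x y x y = 0,
      Bf al be ga x y w1 w2 = 1 &
      Bf al be ga w1 w2 w1 w2 = 0 \/ Bf al be ga w1 w2 w1 w2 = 1].
Proof.
move=> hd; have [x [y [u [v [hQ huv]]]]] := iso_vec hd.
pose w1 := - u * ga + v * be; pose w2 := u * be - v * al.
have hB : Bf al be ga x y w1 w2 = 1.
  transitivity ((u * x + v * y) * (be * be - al * ga)); first by rewrite /Bf /w1 /w2; ring.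
  by rewrite huv mul1r -opprB hd opprK.
pose s0 := Bf al be ga w1 w2 w1 w2.
pose lam := (s0 %/ 2)%Z.
have hB' : Bf al be ga x y (w1 - lam * x) (w2 - lam * y) = 1.
  transitivity (Bf al be ga x y w1 w2 - lam * Bf al be ga x y x y); first by rewrite /Bf; ring.
  by rewrite hB hQ mulr0 subr0.
have hQ' : Bf al be ga (w1 - lam * x) (w2 - lam * y) (w1 - lam * x) (w2 - lam * y) = (s0 %% 2)%Z.
  transitivity (s0 - lam * 2 * Bf al be ga x y w1 w2 + lam * lam * Bf al be ga x y x y).
    by rewrite /s0 /Bf; ring.
  rewrite hB hQ mulr0 addr0 mulr1 {1}(divz_eq s0 2) /lam; ring.
exists x, y, (w1 - lam * x), (w2 - lam * y); split => //.
- set W1 := w1 - lam * x; set W2 := w2 - lam * y in hB' hQ' *.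
  have : (x * W2 - y * W1) * (x * W2 - y * W1) * (al * ga - be * be) =
    Bf al be ga x y x y * Bf al be ga W1 W2 W1 W2 - Bf al be ga x y W1 W2 * Bf al be ga x y W1 W2.
    by rewrite /Bf; ring.
  rewrite hd hQ hB' mul0r sub0r mulr1 => h.
  by move: h; rewrite mulrN1 => /oppr_inj.
- rewrite hQ'.
  have h1 : 0 <= (s0 %% 2)%Z by apply: modz_ge0.
  have h2 : (s0 %% 2)%Z < `|2%:Z| by apply: ltz_mod.
  move: h1 h2.
  set m := (s0 %% 2)%Z => h1 h2.
  have : m = 0 \/ m = 1 by lia.
  by [].
Qed.

Unset Implicit Arguments.


Theorem proposition4p6 (d : nat) (hd : (1 <= d)%N)
  (r : 'rV[int]_(2 + 2 + 8 + 8 + 1)) :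
  primitive r -> bil (L2d d) r r = - (2 * d)%:Z ->
  (is_div (L2d d) r (2 * d)%:Z ->
     perp_iso (L2d d) r (dsum (dsum (dsum Ugram Ugram) E8m) E8m)) /\
  (is_div (L2d d) r d%:Z ->
     perp_iso (L2d d) r
       (dsum (dsum (dsum (dsum Ugram E8m) E8m) (rank1 2)) (rank1 (-2)))
     \/ perp_iso (L2d d) r (dsum (dsum (dsum Ugram E8m) E8m) U2gram)).
Proof.
move=> _ hrr.
have [a [b [c [c4 [k1 [k2 [z er]]]]]]] := st_surj r.
have [k [t R]] := eichler d z a b c c4 k1 k2.
rewrite -er in R.
have h0 := reach_bil R; rewrite hrr bil_st !bil0l in h0.
have eD : (2 * d)%:Z = 2 * d%:Z by rewrite PoszM.
have dz : d%:Z != 0 by rewrite eqz_nat -lt0n.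
have D0 : (2 * d)%:Z != 0 by rewrite eD mulf_neq0.
have hdivk : forall m, is_div (L2d d) r m ->
    (m %| k)%Z /\ exists xa xb xz, k * xb + k * t * xa - (2 * d)%:Z * z * xz = m.
  move=> m hm; have [_ [hall [x hx]]] := reach_div R hm.
  split.
    by have := hall (st 0 1 0 0 0 0 0); rewrite bil_st !bil0l; congr (_ %| _)%Z; ring.
  have [xa [xb [xc [xd [l1 [l2 [xz ex]]]]]]] := st_surj x.
  exists xa, xb, xz; rewrite -hx ex bil_st !bil0l; ring.
split.
- move=> hdv; apply: (reach_perp R).
  have [hk [xa [xb [xz hx]]]] := hdivk _ hdv.
  set D := (2 * d)%:Z in hx h0 hk D0 eD *.
  set kp := (k %/ D)%Z.
  have ek : k = D * kp by rewrite mulrC divzK.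
  have huv : (xb + t * xa) * kp + (- xz) * z = 1.
    apply: (mulfI D0); rewrite mulr1 -[in RHS]hx ek; ring.
  have hdet : (- (2 * t)) * (- (D * kp * kp)) - z * z = -1.
    apply: (mulfI D0); apply: (@addIr _ D).
    transitivity (k * (k * t) + k * t * k + 0 * 0 + 0 * 0 + 0 + 0 - D * z * z + D).
      by rewrite ek; ring.
    by rewrite h0; ring.
  have [x [y [w1 [w2 [hs hQ hB hC]]]]] := binred hdet.
  have hC0 : Bf (- (2 * t)) z (- (D * kp * kp)) w1 w2 w1 w2 = 0.
    case: hC => // h1; exfalso.
    have : 1 = 2 * (- t * w1 * w1 + z * w1 * w2 - d%:Z * kp * kp * w2 * w2).
      by rewrite -[LHS]h1 /Bf eD; ring.
    lia.
  have [hsp hin] := @Nlemma d D kp z t z (xb + t * xa) (- xz) x y w1 w2 D0 huv erefl hs.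
  rewrite ek; apply: (shape1 hsp hin).
  + transitivity (Bf (- (2 * t)) z (- (D * kp * kp)) x y x y); last exact: hQ.
    by rewrite bil_st !bil0l /Bf; ring.
  + transitivity (Bf (- (2 * t)) z (- (D * kp * kp)) x y w1 w2); last exact: hB.
    by rewrite bil_st !bil0l /Bf; ring.
  + transitivity (Bf (- (2 * t)) z (- (D * kp * kp)) x y w1 w2); last exact: hB.
    by rewrite bil_st !bil0l /Bf; ring.
  + transitivity (Bf (- (2 * t)) z (- (D * kp * kp)) w1 w2 w1 w2); last exact: hC0.
    by rewrite bil_st !bil0l /Bf; ring.
- move=> hdv.
  have [hk [xa [xb [xz hx]]]] := hdivk _ hdv.
  set D := (2 * d)%:Z in hx h0 D0 eD *.
  set kp := (k %/ d%:Z)%Z.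
  have ek : k = d%:Z * kp by rewrite mulrC divzK.
  have huv : (xb + t * xa) * kp + (- xz) * (2 * z) = 1.
    apply: (mulfI dz); rewrite mulr1 -[in RHS]hx ek eD; ring.
  have hD : D * z = d%:Z * (2 * z) by rewrite eD; ring.
  have hdet : (- t) * (- (d%:Z * kp * kp)) - z * z = -1.
    apply: (mulfI D0); apply: (@addIr _ D).
    transitivity (k * (k * t) + k * t * k + 0 * 0 + 0 * 0 + 0 + 0 - D * z * z + D).
      by rewrite ek eD; ring.
    by rewrite h0; ring.
  have [x [y [w1 [w2 [hs hQ hB hC]]]]] := binred hdet.
  case: hC => hC.
  + right; apply: (reach_perp R).
    have [hsp hin] := @Nlemma d d%:Z kp (2 * z) t z (xb + t * xa) (- xz) x y w1 w2 dz huv hD hs.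
    rewrite ek; apply: (shape3 hsp hin).
    * transitivity (2 * Bf (- t) z (- (d%:Z * kp * kp)) x y x y); last by rewrite hQ mulr0.
      by rewrite bil_st !bil0l /Bf ?PoszM; ring.
    * transitivity (2 * Bf (- t) z (- (d%:Z * kp * kp)) x y w1 w2); last by rewrite hB mulr1.
      by rewrite bil_st !bil0l /Bf ?PoszM; ring.
    * transitivity (2 * Bf (- t) z (- (d%:Z * kp * kp)) x y w1 w2); last by rewrite hB mulr1.
      by rewrite bil_st !bil0l /Bf ?PoszM; ring.
    * transitivity (2 * Bf (- t) z (- (d%:Z * kp * kp)) w1 w2 w1 w2); last by rewrite hC mulr0.
      by rewrite bil_st !bil0l /Bf ?PoszM; ring.
  + left; apply: (reach_perp R).
    have hs' : (w1 * (y - w2) - w2 * (x - w1)) * (w1 * (y - w2) - w2 * (x - w1)) = 1.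
      by rewrite -hs; ring.
    have [hsp hin] :=
      @Nlemma d d%:Z kp (2 * z) t z (xb + t * xa) (- xz) w1 w2 (x - w1) (y - w2) dz huv hD hs'.
    rewrite ek; apply: (shape2 hsp hin).
    * transitivity (2 * Bf (- t) z (- (d%:Z * kp * kp)) w1 w2 w1 w2); last by rewrite hC mulr1.
      by rewrite bil_st !bil0l /Bf ?PoszM; ring.
    * transitivity (2 * (Bf (- t) z (- (d%:Z * kp * kp)) x y w1 w2
          - Bf (- t) z (- (d%:Z * kp * kp)) w1 w2 w1 w2)); last by rewrite hB hC subrr mulr0.
      by rewrite bil_st !bil0l /Bf ?PoszM; ring.
    * transitivity (2 * (Bf (- t) z (- (d%:Z * kp * kp)) x y w1 w2
          - Bf (- t) z (- (d%:Z * kp * kp)) w1 w2 w1 w2)); last by rewrite hB hC subrr mulr0.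
      by rewrite bil_st !bil0l /Bf ?PoszM; ring.
    * transitivity (2 * (Bf (- t) z (- (d%:Z * kp * kp)) x y x y
          - 2 * Bf (- t) z (- (d%:Z * kp * kp)) x y w1 w2
          + Bf (- t) z (- (d%:Z * kp * kp)) w1 w2 w1 w2)); last by rewrite hQ hB hC; ring.
      by rewrite bil_st !bil0l /Bf ?PoszM; ring.
Qed.
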